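(* Let $\mathcal{A}$ be a cost automaton over a finite alphabet $\Sigma$ and let $L \subseteq \Sigma^*$ be a regular language. The winning condition for player B in the limitedness game with bound $\infty$ (for $\mathcal{A}$ and $L$) is an $\omega$-regular language, i.e. it is recognised by a nondeterministic Büchi automaton.
   Context: A cost automaton is a nondeterministic finite automaton (finite input alphabet, finite set of states, set of initial states, set of final states, finite set of transitions, each transition reading one input letter) additionally equipped with a finite totally ordered set of counters $0,\ldots,n$. For each counter $c$ there is a distinguished subset of transitions that increment $c$ and a distinguished subset of transitions that reset $c$; every transition that resets or increments counter $c$ must also reset all counters $0,\ldots,c-1$. A (finite or infinite) run is a consistent sequence of transitions (the target of each transition equals the source of the next) whose first transition starts in an initial state; a finite run is accepting if it ends in a final state. For sets of transitions $\delta_1,\delta_2,\ldots$, a run in $\delta_1\cdots\delta_i$ (resp. in $\delta_1\delta_2\cdots$) is a run whose $j$-th transition belongs to $\delta_j$ for every $j$. The limitedness game with bound $\infty$ is the following Gale-Stewart game (two players alternate for $\omega$ rounds, player A choosing a letter of his alphabet and then player B a letter of hers, producing an infinite word $a_1\delta_1a_2\delta_2\cdots$; player B wins iff this word lies in the winning condition). Player A's alphabet is $\Sigma$. Player B's alphabet is the set of all sets $\delta$ of transitions of $\mathcal{A}$ such that all transitions in $\delta$ read the same letter $a$ (formally, the union over $a\in\Sigma$ of the sets of sets of transitions reading $a$). The winning condition for player B is the set of sequences $a_1\delta_1a_2\delta_2\cdots$ such that for every $i$: (1) every transition in $\delta_i$ reads the letter $a_i$; (2') for every infinite run in $\delta_1\delta_2\cdots$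 and every counter $c$, if the run increments $c$ infinitely often then it resets $c$ infinitely often; (3) if $a_1\cdots a_i\in L$ then some run in $\delta_1\cdots\delta_i$ is accepting. *)

(* Defs.v *)
From mathcomp Require Import all_boot.
Set Implicit Arguments. Unset Strict Implicit. Unset Printing Implicit Defensive.

Record cost_aut (Sigma : finType) := CostAut {
  cstate : finType;
  ctrans : finType;
  csrc : ctrans -> cstate;
  clbl : ctrans -> Sigma;
  ctgt : ctrans -> cstate;
  cinit : {set cstate};
  cfinal : {set cstate};
  ncnt : nat;
  cincr : 'I_(ncnt.+1) -> {set ctrans};
  creset : 'I_(ncnt.+1) -> {set ctrans};
  cwf : forall (c c' : 'I_(ncnt.+1)) (t : ctrans),
      (t \in cincr c) || (t \in creset c) -> (c' < c)%N -> t \in creset c'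
}.

Record dfa (Sigma : finType) := Dfa {
  dstate : finType;
  dinit : dstate;
  dstep : dstate -> Sigma -> dstate;
  dfinal : {set dstate}
}.

Definition dfa_accepts (Sigma : finType) (D : dfa Sigma) (w : seq Sigma) : bool :=
  foldl (@dstep _ D) (@dinit _ D) w \in @dfinal _ D.

Definition regular (Sigma : finType) (L : seq Sigma -> Prop) : Prop :=
  exists D : dfa Sigma, forall w, L w <-> dfa_accepts D w.

Record buchi (Gamma : finType) := Buchi {
  bstate : finType;
  binit : {set bstate};
  bdelta : bstate -> Gamma -> bstate -> bool;
  bacc : {set bstate}
}.

Definition infinitely_often (P : nat -> Prop) : Prop :=
  forall N, exists j, (N <= j)%N /\ P j.

Definition buchi_accepts (Gamma : finType) (B : buchi Gamma) (w : nat -> Gamma) : Prop :=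
  exists rho : nat -> bstate B,
    rho 0 \in binit B /\
    (forall i, bdelta (rho i) (w i) (rho i.+1)) /\
    infinitely_often (fun i => rho i \in bacc B).

Section Game.
Variables (Sigma : finType) (A : cost_aut Sigma).

Definition Balph : finType :=
  {d : {set ctrans A} | [exists a : Sigma, [forall t in d, clbl t == a]]}.

(* Alphabet of the played words a_1 d_1 a_2 d_2 ... *)
Definition game_alph : finType := (Sigma + Balph)%type.

(* r is an infinite run in d_1 d_2 ... (0-indexed here) *)
Definition inf_run_in (d : nat -> Balph) (r : nat -> ctrans A) : Prop :=
  csrc (r 0) \in cinit A /\
  (forall j, ctgt (r j) = csrc (r j.+1)) /\
  (forall j, r j \in val (d j)).

(* r restricted to positions 0..i is an accepting finite run in d_1 ... d_(i+1) *)
Definition acc_fin_run_in (d : nat -> Balph) (i : nat) (r : nat -> ctrans A) : Prop :=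
  csrc (r 0) \in cinit A /\
  (forall j, (j < i)%N -> ctgt (r j) = csrc (r j.+1)) /\
  (forall j, (j <= i)%N -> r j \in val (d j)) /\
  ctgt (r i) \in cfinal A.

Definition win_cond (L : seq Sigma -> Prop) (w : nat -> game_alph) : Prop :=
  exists (a : nat -> Sigma) (d : nat -> Balph),
    (forall i, w i.*2 = inl (a i) /\ w i.*2.+1 = inr (d i)) /\
    (* (1) *)
    (forall i t, t \in val (d i) -> clbl t = a i) /\
    (* (2') *)
    (forall r, inf_run_in d r -> forall c : 'I_(ncnt A).+1,
        infinitely_often (fun j => r j \in cincr c) ->
        infinitely_often (fun j => r j \in creset c)) /\
    (* (3) *)
    (forall i, L (mkseq a i.+1) -> exists r, acc_fin_run_in d i r).

End Game.

(* Main.v *)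
Require Import Defs.
From mathcomp Require Import all_boot.
From Stdlib Require Import ClassicalEpsilon Classical.
Set Implicit Arguments. Unset Strict Implicit. Unset Printing Implicit Defensive.


Definition asb (P : Prop) : bool := if excluded_middle_informative P then true else false.
Lemma asbP (P : Prop) : asb P <-> P.
Proof. by rewrite /asb; case: excluded_middle_informative. Qed.
Lemma asbF (P : Prop) : ~ P -> asb P = false.
Proof. by rewrite /asb; case: excluded_middle_informative. Qed.

Definition infP (P : nat -> Prop) := forall N, exists j, N <= j /\ P j.

Lemma pigeon (C : finType) (P : nat -> Prop) (f : nat -> C) :
  infP P -> exists c, infP (fun j => P j /\ f j = c).
Proof.
move=> hP; apply: NNPP => hn.
have hc : forall c, exists N, forall j, N <= j -> ~ (P j /\ f j = c).
  move=> c; apply: NNPP => h2; apply: hn; exists c => N.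
  apply: NNPP => h3; apply: h2; exists N => j hj hj2; apply: h3; by exists j.
pose Nf c := proj1_sig (constructive_indefinite_description _ (hc c)).
have hNf c : forall j, Nf c <= j -> ~ (P j /\ f j = c).
  exact: (proj2_sig (constructive_indefinite_description _ (hc c))).
have [j [hj Pj]] := hP (\max_c Nf c).
apply: (hNf (f j) j) => //.
exact: leq_trans (leq_bigmax (F := Nf) (f j)) hj.
Qed.

Section Ramsey.
Variables (C : finType) (col : nat -> nat -> C).

Lemma rstep (P : nat -> Prop) : infP P -> exists x c (P' : nat -> Prop),
  P x /\ infP P' /\ (forall j, P' j -> P j /\ x < j /\ col x j = c).
Proof.
move=> hP; have [x [_ Px]] := hP 0.
have hP2 : infP (fun j => P j /\ x < j).
  move=> N; have [j [hj Pj]] := hP (maxn N x.+1).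
  exists j; split; first by apply: leq_trans hj; exact: leq_maxl.
  by split=> //; apply: leq_trans hj; exact: leq_maxr.
have [c hc] := pigeon (col x) hP2.
exists x, c, (fun j => (P j /\ x < j) /\ col x j = c); split=> //; split=> //.
by move=> j [[]].
Qed.

Definition IS := {P : nat -> Prop | infP P}.

Lemma rstep' (s : IS) : {t : nat * C * IS |
  sval s t.1.1 /\ forall j, sval t.2 j -> sval s j /\ t.1.1 < j /\ col t.1.1 j = t.1.2}.
Proof.
apply: constructive_indefinite_description.
have [x [c [P' [h1 [h2 h3]]]]] := rstep (proj2_sig s).
by exists (x, c, exist _ P' h2).
Qed.

Fixpoint bld (s0 : IS) k : IS :=
  match k with 0 => s0 | k'.+1 => (sval (rstep' (bld s0 k'))).2 end.

Variable s0 : IS.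
Definition xx k := (sval (rstep' (bld s0 k))).1.1.
Definition cc k := (sval (rstep' (bld s0 k))).1.2.

Lemma bld_mono k k' j : k <= k' -> sval (bld s0 k') j -> sval (bld s0 k) j.
Proof.
move=> /subnK <-; elim: (k' - k) j => [|m IH] j //=.
rewrite ?addSn /= => h; apply: IH.
by have [] := proj2 (proj2_sig (rstep' (bld s0 (m + k)))) j h.
Qed.

Lemma xx_in k : sval (bld s0 k) (xx k).
Proof. exact: (proj1 (proj2_sig (rstep' (bld s0 k)))). Qed.

Lemma xx_key k k' : k < k' -> xx k < xx k' /\ col (xx k) (xx k') = cc k.
Proof.
move=> hk; have := bld_mono hk (xx_in k').
by move=> /(proj2 (proj2_sig (rstep' (bld s0 k)))) [_ []].
Qed.
End Ramsey.

Lemma ramsey_path (C : finType) (col : nat -> nat -> C) (lo : nat) :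
  exists (n : nat -> nat) (e : C), lo <= n 0 /\ (forall i, n i < n i.+1) /\
    (forall i, col (n i) (n i.+1) = e).
Proof.
have hs : infP (fun j => lo <= j).
  by move=> N; exists (maxn N lo); split; [exact: leq_maxl | exact: leq_maxr].
pose s0 : IS := exist _ _ hs.
have hT : infP (fun _ => True) by move=> N; exists N.
have [e he] := pigeon (cc col s0) hT.
have he' : forall N, {j | N <= j /\ cc col s0 j = e}.
  move=> N; apply: constructive_indefinite_description.
  by have [j [hj [_ h]]] := he N; exists j.
pose fix g i := match i with 0 => sval (he' 0) | i'.+1 => sval (he' (g i').+1) end.
have gS i : g i < g i.+1 by exact: (proj1 (proj2_sig (he' (g i).+1))).
have gE i : cc col s0 (g i) = e by case: i => [|i]; exact: (proj2 (proj2_sig (he' _))).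
exists (fun i => xx col s0 (g i)), e; split; last split.
- exact: (bld_mono (leq0n (g 0)) (xx_in col s0 (g 0))).
- by move=> i; have [] := xx_key col s0 (gS i).
- by move=> i; have [_ ->] := xx_key col s0 (gS i).
Qed.


Section Walks.
Variables (Sigma : finType) (A : cost_aut Sigma).
Local Notation Q := (cstate A).
Local Notation TR := (ctrans A).
Local Notation CN := ('I_(ncnt A).+1).

Definition X : finType := (Q * Q * {set CN} * {set CN})%type.
Definition incs (t : TR) : {set CN} := [set c | t \in cincr c].
Definition rsts (t : TR) : {set CN} := [set c | t \in creset c].
Definition post (R : {set Q}) (d : {set TR}) : {set Q} :=
  [set q | [exists t in d, (csrc t \in R) && (ctgt t == q)]].
Definition idT : {set X} :=
  [set x : X | (x.1.1.1 == x.1.1.2) && (x.1.2 == set0) && (x.2 == set0)].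
Definition stepT (T : {set X}) (d : {set TR}) : {set X} :=
  [set x : X | [exists y in T, exists t in d, (y.1.1.2 == csrc t) &&
     (x == (y.1.1.1, ctgt t, y.1.2 :|: incs t, y.2 :|: rsts t))]].

Variable dv : nat -> {set TR}.

Fixpoint reach k : {set Q} :=
  match k with 0 => cinit A | k'.+1 => post (reach k') (dv k') end.
Fixpoint typ b m : {set X} :=
  match m with 0 => idT | m'.+1 => stepT (typ b m') (dv (b + m')) end.
Definition wk b e (s : nat -> Q) (r : nat -> TR) :=
  forall k, b <= k < e -> [/\ r k \in dv k, csrc (r k) = s k & ctgt (r k) = s k.+1].
Definition Iset (r : nat -> TR) b e : {set CN} :=
  [set c | asb (exists k, b <= k < e /\ r k \in cincr c)].
Definition Rset (r : nat -> TR) b e : {set CN} :=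
  [set c | asb (exists k, b <= k < e /\ r k \in creset c)].

Lemma Iset0 r b : Iset r b b = set0.
Proof.
apply/setP=> c; rewrite !inE; apply/negbTE/negP => /asbP [k [/andP [h1 h2] _]].
by move: (leq_ltn_trans h1 h2); rewrite ltnn.
Qed.
Lemma Rset0 r b : Rset r b b = set0.
Proof.
apply/setP=> c; rewrite !inE; apply/negbTE/negP => /asbP [k [/andP [h1 h2] _]].
by move: (leq_ltn_trans h1 h2); rewrite ltnn.
Qed.
Lemma IsetS r b e : b <= e -> Iset r b e.+1 = Iset r b e :|: incs (r e).
Proof.
move=> hbe; apply/setP=> c; rewrite !inE; apply/idP/idP.
- move=> /asbP [k [/andP [h1 h2] h3]]; rewrite ltnS leq_eqVlt in h2.
  case/orP: h2 => [/eqP ek|h2]; first by subst k; rewrite h3 orbT.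
  by apply/orP; left; apply/asbP; exists k; rewrite h1 h2.
- case/orP => [/asbP [k [/andP [h1 h2] h3]]|h].
  + by apply/asbP; exists k; rewrite h1 ltnS (ltnW h2).
  + by apply/asbP; exists e; rewrite hbe ltnSn.
Qed.
Lemma RsetS r b e : b <= e -> Rset r b e.+1 = Rset r b e :|: rsts (r e).
Proof.
move=> hbe; apply/setP=> c; rewrite !inE; apply/idP/idP.
- move=> /asbP [k [/andP [h1 h2] h3]]; rewrite ltnS leq_eqVlt in h2.
  case/orP: h2 => [/eqP ek|h2]; first by subst k; rewrite h3 orbT.
  by apply/orP; left; apply/asbP; exists k; rewrite h1 h2.
- case/orP => [/asbP [k [/andP [h1 h2] h3]]|h].
  + by apply/asbP; exists k; rewrite h1 ltnS (ltnW h2).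
  + by apply/asbP; exists e; rewrite hbe ltnSn.
Qed.

Lemma wk_sub b e b' e' s r : wk b e s r -> b <= b' -> e' <= e -> wk b' e' s r.
Proof.
move=> h h1 h2 k /andP [k1 k2]; apply: h.
by rewrite (leq_trans h1 k1) (leq_trans k2 h2).
Qed.

Lemma reachP_r k s r : s 0 \in cinit A -> wk 0 k s r -> s k \in reach k.
Proof.
elim: k => [|k IH] //= h0 hw.
rewrite inE; apply/existsP; exists (r k).
have [h1 h2 h3] := hw k (leqnn _).
rewrite h1 h2 h3 eqxx andbT /=; apply: IH => //.
exact: wk_sub hw (leqnn _) (leqnSn _).
Qed.

Definition sext e (s : nat -> Q) (t : TR) := fun j => if j <= e then s j else ctgt t.
Definition rext e (r : nat -> TR) (t : TR) := fun j => if j < e then r j else t.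

Lemma wk_ext b e s r t : b <= e -> wk b e s r -> t \in dv e -> csrc t = s e ->
  wk b e.+1 (sext e s t) (rext e r t).
Proof.
move=> hbe hw ht hs k /andP [k1 k2]; rewrite /sext /rext.
rewrite ltnS leq_eqVlt in k2; case/orP: k2 => [/eqP ->|k2].
  by rewrite ltnn leqnn; split.
have [h1 h2 h3] := hw k (introT andP (conj k1 k2)).
  by rewrite k2 (ltnW k2) h1 h2 h3.
Qed.

Lemma Iset_eq r r' b e : (forall k, b <= k < e -> r k = r' k) -> Iset r b e = Iset r' b e.
Proof.
move=> h; apply/setP=> c; rewrite !inE; apply/idP/idP => /asbP [k [hk h2]];
  apply/asbP; exists k; split=> //; first by rewrite -(h k hk).
by rewrite (h k hk).
Qed.
Lemma Rset_eq r r' b e : (forall k, b <= k < e -> r k = r' k) -> Rset r b e = Rset r' b e.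
Proof.
move=> h; apply/setP=> c; rewrite !inE; apply/idP/idP => /asbP [k [hk h2]];
  apply/asbP; exists k; split=> //; first by rewrite -(h k hk).
by rewrite (h k hk).
Qed.

Lemma reachP (t0 : TR) k x : x \in reach k ->
  exists s r, [/\ s 0 \in cinit A, wk 0 k s r & s k = x].
Proof.
elim: k x => [|k IH] x /=.
  by move=> hx; exists (fun _ => x), (fun _ => t0); split=> // j.
rewrite inE => /existsP [t /and3P [ht hs /eqP hx]].
have [s [r [h0 hw hk]]] := IH _ hs.
exists (sext k s t), (rext k r t); split.
- by rewrite /sext leq0n.
- by apply: wk_ext => //; rewrite hk.
- by rewrite /sext ltnn.
Qed.

Lemma typP_r b m s r : wk b (b + m) s r ->
  (s b, s (b + m), Iset r b (b + m), Rset r b (b + m)) \in typ b m.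
Proof.
elim: m => [|m IH] hw /=.
  by rewrite addn0 Iset0 Rset0 inE /= !eqxx.
rewrite inE; apply/existsP; exists (s b, s (b + m), Iset r b (b + m), Rset r b (b + m)).
rewrite IH; last by apply: wk_sub hw (leqnn _) _; rewrite leq_add2l.
apply/existsP; exists (r (b + m)).
have hbm : b <= b + m < b + m.+1 by rewrite leq_addr addnS ltnSn.
have [h1 h2 h3] := hw (b + m) hbm.
rewrite h1 h2 eqxx /= addnS IsetS ?leq_addr // RsetS ?leq_addr // h3.
by rewrite eqxx.
Qed.

Lemma typP (t0 : TR) b m x : x \in typ b m ->
  exists s r, wk b (b + m) s r /\
    x = (s b, s (b + m), Iset r b (b + m), Rset r b (b + m)).
Proof.
elim: m x => [|m IH] x /=.
  rewrite inE => /andP [/andP [/eqP h1 /eqP h2] /eqP h3].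
  exists (fun _ => x.1.1.1), (fun _ => t0); split.
    by move=> k; rewrite addn0 ltnNge => /andP [->].
  rewrite addn0 Iset0 Rset0; case: x h1 h2 h3 => [[[p q] I] R] /= -> -> -> //.
rewrite inE => /existsP [y /andP [hy /existsP [t /and3P [ht /eqP hs /eqP hx]]]].
have [s [r [hw hyE]]] := IH _ hy.
exists (sext (b + m) s t), (rext (b + m) r t); split.
  rewrite addnS; apply: wk_ext => //; first exact: leq_addr.
  by rewrite -hs hyE.
rewrite hx hyE /= addnS /sext leq_addr ltnn.
rewrite IsetS ?leq_addr // RsetS ?leq_addr //.
rewrite (@Iset_eq (rext (b + m) r t) r); last by move=> k /andP [_ hk]; rewrite /rext hk.
rewrite (@Rset_eq (rext (b + m) r t) r); last by move=> k /andP [_ hk]; rewrite /rext hk.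
by rewrite /rext ltnn.
Qed.

End Walks.


Section Inc.
Variables (n : nat -> nat) (hn : forall i, n i < n i.+1).
Lemma inc_mono i j : i <= j -> n i <= n j.
Proof.
move=> /subnK <-; elim: (j - i) => [|m IH] //=.
by rewrite addSn (leq_trans IH (ltnW (hn _))).
Qed.
Lemma inc_strict i j : i < j -> n i < n j.
Proof. by move=> h; apply: leq_trans (hn i) (inc_mono h). Qed.
Lemma inc_ge i : i + n 0 <= n i.
Proof. elim: i => [|i IH] //; rewrite addSn; exact: (leq_ltn_trans IH (hn i)). Qed.
Lemma inc_cover k : n 0 <= k -> exists i, n i <= k < n i.+1.
Proof.
elim: k => [|k IH] h.
  by exists 0; rewrite h /=; exact: (leq_ltn_trans (leq0n _) (hn 0)).
case: (leqP (n 0) k) => hk.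
  have [i /andP [h1 h2]] := IH hk.
  rewrite leq_eqVlt in h2; case/orP: h2 => [/eqP h2|h2].
    by exists i.+1; rewrite -h2 leqnn /= h2; exact: hn.
  by exists i; rewrite h2 (leq_trans h1 (leqnSn _)).
exists 0; rewrite h /=.
have e : n 0 = k.+1 by apply/eqP; rewrite eqn_leq h hk.
by rewrite -e hn.
Qed.
Lemma inc_uniq i j k : n i <= k < n i.+1 -> n j <= k < n j.+1 -> i = j.
Proof.
move=> /andP [h1 h2] /andP [h3 h4]; apply/eqP; rewrite eqn_leq.
apply/andP; split; rewrite leqNgt; apply/negP => h.
  by have := inc_mono h; rewrite leqNgt (leq_ltn_trans h1 h4).
by have := inc_mono h; rewrite leqNgt (leq_ltn_trans h3 h2).
Qed.
End Inc.

Section Aut.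
Variables (Sigma : finType) (A : cost_aut Sigma) (D : dfa Sigma).
Local Notation Q := (cstate A).
Local Notation TR := (ctrans A).
Local Notation CN := ('I_(ncnt A).+1).
Local Notation XX := (X A).

Definition Good (s : {set Q}) (e : {set XX}) : Prop :=
  ~ exists (q : nat -> Q) (I R : nat -> {set CN}) (c : CN),
      [/\ q 0 \in s, (forall i, (q i, q i.+1, I i, R i) \in e),
        infinitely_often (fun i => c \in I i) &
        exists N, forall i, N <= i -> c \notin R i].

Definition MT : finType := option ({set XX} * {set XX}).
Definition St : finType := (option Sigma * dstate D * {set Q} * MT * bool)%type.

Definition MStep (R' : {set Q}) (M : MT) (d : {set TR}) (M' : MT) (f' : bool) : Prop :=
  [\/ [/\ M = None, M' = None & f' = false],
      [/\ M = None, (exists e, Good R' e /\ M' = Some (e, idT A)) & f' = true] |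
      exists e T, M = Some (e, T) /\
        ((M' = Some (e, stepT T d) /\ f' = false) \/
         [/\ stepT T d = e, M' = Some (e, idT A) & f' = true])].

Definition Step (x : St) (l : game_alph A) (y : St) : Prop :=
  match l with
  | inl a => x.1.1.1.1 = None /\ y = (Some a, dstep x.1.1.1.2 a, x.1.1.2, x.1.2, false)
  | inr d => exists a, [/\ x.1.1.1.1 = Some a, y.1.1.1.1 = None, y.1.1.1.2 = x.1.1.1.2,
        (forall t, t \in val d -> clbl t = a) &
        [/\ y.1.1.2 = post x.1.1.2 (val d),
        (x.1.1.1.2 \in dfinal D -> exists q, q \in y.1.1.2 /\ q \in cfinal A) &
        MStep y.1.1.2 x.1.2 (val d) y.1.2 y.2]]
  end.

Definition st0 : St := (None, dinit D, cinit A, None, false).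

Definition Bu : buchi (game_alph A) :=
  @Buchi _ St [set x : St | x == st0] (fun x l y => asb (Step x l y)) [set x : St | x.2].

End Aut.


Section Glue.
Variables (Sigma : finType) (A : cost_aut Sigma).
Local Notation Q := (cstate A).
Local Notation TR := (ctrans A).
Variables (dv : nat -> {set TR}) (n : nat -> nat) (hn : forall i, n i < n i.+1).

Lemma idx_ex k : exists i, (k < n 0 /\ i = 0) \/ (n i <= k < n i.+1).
Proof.
case: (leqP (n 0) k) => hk; last by exists 0; left.
by have [i hi] := inc_cover hn hk; exists i; right.
Qed.
Definition idx k := proj1_sig (constructive_indefinite_description _ (idx_ex k)).
Lemma idxP k : (k < n 0 /\ idx k = 0) \/ (n (idx k) <= k < n (idx k).+1).
Proof. exact: (proj2_sig (constructive_indefinite_description _ (idx_ex k))). Qed.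
Lemma idx_eq i k : n i <= k < n i.+1 -> idx k = i.
Proof.
move=> hi; case: (idxP k) => [[hk _]|h]; last exact: (inc_uniq hn h hi).
case/andP: hi => h1 _; have := leq_trans (inc_mono hn (leq0n i)) h1.
by rewrite leqNgt hk.
Qed.

Lemma glue (sp : nat -> Q) (rp : nat -> TR) (sg : nat -> nat -> Q) (rg : nat -> nat -> TR) :
  0 < n 0 -> wk dv 0 (n 0) sp rp -> sp (n 0) = sg 0 (n 0) ->
  (forall i, wk dv (n i) (n i.+1) (sg i) (rg i) /\ sg i (n i.+1) = sg i.+1 (n i.+1)) ->
  exists (s : nat -> Q) (r : nat -> TR), [/\ s 0 = sp 0,
    (forall k, [/\ r k \in dv k, csrc (r k) = s k & ctgt (r k) = s k.+1]) &
    (forall i k, n i <= k < n i.+1 -> r k = rg i k)].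
Proof.
move=> hn0 hwp hsp hseg.
exists (fun k => if k < n 0 then sp k else sg (idx k) k).
exists (fun k => if k < n 0 then rp k else rg (idx k) k); split.
- by rewrite hn0.
- move=> k; case: (ltnP k (n 0)) => hk.
    have [h1 h2 h3] := hwp k (introT andP (conj (leq0n k) hk)).
    rewrite h1 h2 h3; split=> //.
    case: (ltnP k.+1 (n 0)) => hk2 //.
    have ek : k.+1 = n 0 by apply/eqP; rewrite eqn_leq hk hk2.
    by rewrite ek (@idx_eq 0) // leqnn hn.
  case: (idxP k) => [[hk2 _]|hi]; first by move: hk; rewrite leqNgt hk2.
  set i := idx k in hi *.
  have [h1 h2 h3] := (proj1 (hseg i)) k hi.
  rewrite h1 h2 h3 ltnNge (leq_trans hk (leqnSn _)) /=; split=> //.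
  case/andP: hi => hi1 hi2; rewrite leq_eqVlt in hi2.
  case/orP: hi2 => [/eqP e2|hi2].
    rewrite e2 (@idx_eq i.+1 (n i.+1)); first by rewrite (proj2 (hseg i)).
    by rewrite leqnn hn.
  by rewrite (@idx_eq i k.+1) // hi2 (leq_trans hi1 (leqnSn _)).
- move=> i k hik; rewrite (idx_eq hik).
  case/andP: (hik) => h1 _; rewrite ltnNge (leq_trans (inc_mono hn (leq0n i)) h1) //.
Qed.
End Glue.


Section Complete.
Variables (Sigma : finType) (A : cost_aut Sigma) (D : dfa Sigma) (L : seq Sigma -> Prop).
Hypothesis HL : forall u, L u <-> dfa_accepts D u.
Local Notation Q := (cstate A).
Local Notation TR := (ctrans A).
Local Notation CN := ('I_(ncnt A).+1).
Local Notation XX := (X A).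
Variables (w : nat -> game_alph A) (a : nat -> Sigma) (d : nat -> Balph A).
Hypothesis Hw : forall i, w i.*2 = inl (a i) /\ w i.*2.+1 = inr (d i).
Hypothesis H1 : forall i t, t \in val (d i) -> clbl t = a i.
Hypothesis H2 : forall r, inf_run_in d r -> forall c : CN,
        infinitely_often (fun j => r j \in cincr c) ->
        infinitely_often (fun j => r j \in creset c).
Hypothesis H3 : forall i, L (mkseq a i.+1) -> exists r, acc_fin_run_in d i r.

Definition dv k := val (d k).
Definition col i j := typ dv i (j - i).

Variables (n : nat -> nat) (e : {set XX}).
Hypotheses (hn0 : 1 <= n 0) (hn : forall i, n i < n i.+1) (hne : forall i, col (n i) (n i.+1) = e).

Lemma hseg i : typ dv (n i) (n i.+1 - n i) = e.
Proof. exact: hne. Qed.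

Lemma goodE : Good (reach dv (n 0)) e.
Proof.
move=> [q [I [R [c [hq0 hqe hio [N hN]]]]]].
have [t0 _] : exists t : TR, True.
  move: hq0; case E: (n 0) hn0 => [|k] // _ /=.
  by rewrite inE => /existsP [t _]; exists t.
have segs : forall i, exists sr : (nat -> Q) * (nat -> TR),
    [/\ wk dv (n i) (n i.+1) sr.1 sr.2, sr.1 (n i) = q i, sr.1 (n i.+1) = q i.+1,
        I i = Iset sr.2 (n i) (n i.+1) & R i = Rset sr.2 (n i) (n i.+1)].
  move=> i; have := hqe i; rewrite -(hseg i) => /(typP t0) [s [r [hw hx]]].
  rewrite subnKC ?(ltnW (hn i)) // in hw hx.
  case: hx => h1 h2 h3 h4; by exists (s, r); split.
have [sp [rp [hsp0 hwp hspn]]] := reachP t0 hq0.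
pose sr i := proj1_sig (constructive_indefinite_description _ (segs i)).
have srP i := proj2_sig (constructive_indefinite_description _ (segs i)).
have g1 : sp (n 0) = (sr 0).1 (n 0).
  by rewrite hspn; case: (srP 0) => _ -> _ _ _.
have g2 : forall i, wk dv (n i) (n i.+1) (sr i).1 (sr i).2 /\
    (sr i).1 (n i.+1) = (sr i.+1).1 (n i.+1).
  move=> i; case: (srP i) => h _ -> _ _; case: (srP i.+1) => _ -> _ _ _; by split.
have [s [r [hs0 hr hrg]]] := @glue _ _ dv n hn sp rp (fun i => (sr i).1) (fun i => (sr i).2)
  hn0 hwp g1 g2.
have hrun : inf_run_in d r.
  split; first by case: (hr 0) => _ -> _; rewrite hs0.
  split; first by move=> j; case: (hr j) => _ _ ->; case: (hr j.+1) => _ -> _.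
  by move=> j; case: (hr j).
have hinc : infinitely_often (fun j => r j \in cincr c).
  move=> M; have [i [hi hci]] := hio M.
  have [_ _ _ hI _] := srP i; rewrite hI inE in hci.
  have [k [hk hk2]] := (proj1 (asbP _) hci).
  exists k; rewrite (hrg i k hk); split=> //.
  case/andP: hk => hk _; apply: leq_trans hk.
  apply: leq_trans hi _; apply: leq_trans (inc_ge hn i); exact: leq_addr.
have [j [hj hcj]] := H2 hrun hinc (n N).
have [i /andP [hi1 hi2]] := inc_cover hn (leq_trans (inc_mono hn (leq0n N)) hj).
have hNi : N <= i.
  rewrite leqNgt; apply/negP => hiN.
  by have := leq_trans (inc_mono hn hiN) hj; rewrite leqNgt hi2.
have := hN i hNi; have [_ _ _ _ ->] := srP i; rewrite inE; apply/negP/negPn/asbP.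
by exists j; rewrite hi1 hi2 -(hrg i j) ?hi1.
Qed.

Definition isbp k := asb (exists i, n i = k).
Fixpoint Mseq k : MT A :=
  match k with
  | 0 => None
  | k'.+1 => if isbp k'.+1 then Some (e, idT A) else
      match Mseq k' with None => None | Some p => Some (p.1, stepT p.2 (dv k')) end
  end.
Definition Bst k : St A D :=
  (None, foldl (@dstep _ D) (dinit D) (mkseq a k), reach dv k, Mseq k, isbp k).
Definition Ost k : St A D :=
  (Some (a k), foldl (@dstep _ D) (dinit D) (mkseq a k.+1), reach dv k, Mseq k, false).
Definition rho j := if odd j then Ost j./2 else Bst j./2.

Lemma isbp_n i : isbp (n i).
Proof. by apply/asbP; exists i. Qed.

Lemma isbp_gap i k : n i < k < n i.+1 -> isbp k = false.
Proof.
move=> /andP [h1 h2]; apply: asbF => [[j ej]]; subst k.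
case: (ltnP j i.+1) => hj.
  by have := inc_mono hn (hj : j <= i); rewrite leqNgt h1.
by have := inc_mono hn hj; rewrite leqNgt h2.
Qed.

Lemma Mseq_pre k : k < n 0 -> Mseq k = None.
Proof.
elim: k => [|k IH] // hk /=.
have -> : isbp k.+1 = false.
  apply: asbF => [[j ej]]; have := inc_mono hn (leq0n j).
  by rewrite ej leqNgt hk.
by rewrite IH // (ltnW hk).
Qed.

Lemma Mseq_seg i m : n i + m < n i.+1 -> Mseq (n i + m) = Some (e, typ dv (n i) m).
Proof.
elim: m => [|m IH] hm.
  rewrite addn0; have : 0 < n i by apply: leq_trans hn0 (inc_mono hn (leq0n i)).
  case E: (n i) => [|k] // _ /=; by rewrite -E isbp_n.
rewrite addnS /= (@isbp_gap i); last first.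
  by rewrite -addnS hm andbT addnS ltnS leq_addr.
have hm' : n i + m < n i.+1 by apply: leq_ltn_trans hm; rewrite leq_add2l.
by rewrite IH.
Qed.

Lemma step_even k : Step (Bst k) (inl (a k)) (Ost k).
Proof. split=> //; rewrite /Ost /Bst (mkseqS a k) foldl_rcons. by []. Qed.

Lemma MS k : MStep (reach dv k.+1) (Mseq k) (dv k) (Mseq k.+1) (isbp k.+1).
Proof.
case hb: (isbp k.+1); last first.
  rewrite [Mseq k.+1]/= hb; case: (Mseq k) => [[e' T]|]; last by constructor 1.
  by constructor 3; exists e', T; split=> //; left.
have [i ei] := (proj1 (asbP _) hb).
rewrite [Mseq k.+1]/= hb.
case: i ei => [|i] ei.
  rewrite Mseq_pre; last by rewrite -ei.
  by constructor 2; split=> //; exists e; split=> //; rewrite -ei; exact: goodE.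
have hik : n i <= k by rewrite -ltnS -ei; exact: hn.
have hk : k = n i + (k - n i) by rewrite subnKC.
have hlt : n i + (k - n i) < n i.+1 by rewrite -hk ei.
have hM : Mseq k = Some (e, typ dv (n i) (k - n i)) by rewrite {1}hk (Mseq_seg hlt).
rewrite hM; constructor 3; exists e, (typ dv (n i) (k - n i)).
split=> //; right; split=> //.
have <- : typ dv (n i) (k - n i).+1 = e.
  by rewrite -subSn // -ei; exact: hseg.
by rewrite /= -hk.
Qed.

Lemma step_odd k : Step (Ost k) (inr (d k)) (Bst k.+1).
Proof.
exists (a k); split=> //=; first exact: H1.
split=> //; last exact: MS.
move=> hf; have hL : L (mkseq a k.+1) by apply/HL.
have [r [h0 [hc [hin hfin]]]] := H3 hL.
exists (ctgt (r k)); split=> //.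
pose s j := if j <= k then csrc (r j) else ctgt (r k).
have -> : ctgt (r k) = s k.+1 by rewrite /s ltnn.
apply: (@reachP_r _ _ dv k.+1 s r); first by rewrite /s leq0n.
move=> j /andP [_ hj]; rewrite /s ltnS in hj *; rewrite hj; split.
- exact: hin.
- by [].
- rewrite leq_eqVlt in hj; case/orP: hj => [/eqP ->|hj]; first by rewrite ltnn.
  by rewrite hj; apply: hc.
Qed.

Lemma rho_even k : rho k.*2 = Bst k.
Proof. by rewrite /rho odd_double doubleK. Qed.
Lemma rho_odd k : rho k.*2.+1 = Ost k.
Proof.
rewrite /rho /= odd_double /=.
by rewrite uphalf_double.
Qed.

Lemma rho_acc : buchi_accepts (Bu A D) w.
Proof.
exists rho; split; last split.
- rewrite inE /rho /= /Bst /st0 /=.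
  have -> : isbp 0 = false.
    apply: asbF => [[j ej]]; have := leq_trans hn0 (inc_mono hn (leq0n j)).
    by rewrite ej.
  by [].
- move=> j; apply/asbP; rewrite -(odd_double_half j); move: (j./2) => k.
  case: (odd j).
  + rewrite add1n -doubleS rho_odd rho_even; have [_ ->] := Hw k; exact: step_odd.
  + rewrite add0n rho_even rho_odd; have [-> _] := Hw k; exact: step_even.
- move=> N; exists (n N).*2; split.
    apply: leq_trans (leq_trans (leq_addr (n 0) N) (inc_ge hn N)) _.
    by rewrite -addnn leq_addr.
  by rewrite inE /rho odd_double doubleK /= isbp_n.
Qed.

End Complete.


Section Sound.
Variables (Sigma : finType) (A : cost_aut Sigma) (D : dfa Sigma) (L : seq Sigma -> Prop).
Hypothesis HL : forall u, L u <-> dfa_accepts D u.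
Local Notation Q := (cstate A).
Local Notation TR := (ctrans A).
Local Notation CN := ('I_(ncnt A).+1).
Local Notation XX := (X A).
Variables (w : nat -> game_alph A) (rho : nat -> St A D).
Hypotheses (H0 : rho 0 = st0 A D) (HS : forall i, Step (rho i) (w i) (rho i.+1))
  (Hacc : infinitely_often (fun i => (rho i).2)).

Lemma oa_even k : (rho k.*2).1.1.1.1 = None.
Proof.
elim: k => [|k IH]; first by rewrite H0.
have h1 := HS k.*2; have h2 := HS k.*2.+1; rewrite doubleS.
move: h1 h2; case: (w k.*2) => [a|d] /=.
  move=> [_ ->] /=; case: (w k.*2.+1) => [a'|d'] /=; first by move=> [].
  by move=> [a' [_ -> _ _ _]].
by move=> [a [h _ _ _ _]]; rewrite IH in h.
Qed.

Lemma w_even k : exists a, w k.*2 = inl a /\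
  rho k.*2.+1 = (Some a, dstep (rho k.*2).1.1.1.2 a, (rho k.*2).1.1.2, (rho k.*2).1.2, false).
Proof.
have := HS k.*2; case: (w k.*2) => [a|d] /=.
  by move=> [_ ->]; exists a.
by move=> [a [h _ _ _ _]]; rewrite oa_even in h.
Qed.

Lemma w_odd k : exists d, w k.*2.+1 = inr d.
Proof.
have [a [_ he]] := w_even k.
have := HS k.*2.+1; case: (w k.*2.+1) => [a'|d] /=; last by exists d.
by rewrite he => [[]].
Qed.

Variables (a0 : Sigma) (d0 : Balph A).
Definition aa k := match w k.*2 with inl a => a | inr _ => a0 end.
Definition dd k := match w k.*2.+1 with inr d => d | inl _ => d0 end.
Definition dv' k := val (dd k).
Local Notation B k := (rho k.*2).

Lemma waa k : w k.*2 = inl (aa k).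
Proof. by rewrite /aa; have [a [-> _]] := w_even k. Qed.
Lemma wdd k : w k.*2.+1 = inr (dd k).
Proof. by rewrite /dd; have [d ->] := w_odd k. Qed.
Lemma stE k : rho k.*2.+1 =
  (Some (aa k), dstep (B k).1.1.1.2 (aa k), (B k).1.1.2, (B k).1.2, false).
Proof. by have [a [h ->]] := w_even k; rewrite waa in h; case: h => ->. Qed.

Lemma stO k : exists a, [/\ Some (aa k) = Some a, (B k.+1).1.1.1.1 = None,
   (B k.+1).1.1.1.2 = dstep (B k).1.1.1.2 (aa k),
   (forall t, t \in dv' k -> clbl t = a) &
   [/\ (B k.+1).1.1.2 = post (B k).1.1.2 (dv' k),
       (dstep (B k).1.1.1.2 (aa k) \in dfinal D -> exists q, q \in (B k.+1).1.1.2 /\ q \in cfinal A) &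
       MStep (B k.+1).1.1.2 (B k).1.2 (dv' k) (B k.+1).1.2 (B k.+1).2]].
Proof. by have := HS k.*2.+1; rewrite wdd stE doubleS. Qed.

Lemma lab k t : t \in dv' k -> clbl t = aa k.
Proof. by have [a [[<-] _ _ h _]] := stO k; exact: h. Qed.

Lemma dqE k : (B k).1.1.1.2 = foldl (@dstep _ D) (dinit D) (mkseq aa k).
Proof.
elim: k => [|k IH]; first by rewrite H0.
have [a [_ _ -> _ _]] := stO k.
by rewrite IH mkseqS foldl_rcons.
Qed.

Lemma rchE k : (B k).1.1.2 = reach dv' k.
Proof.
elim: k => [|k IH]; first by rewrite H0.
by have [a [_ _ _ _ [-> _ _]]] := stO k; rewrite IH.
Qed.

Lemma MSk k : MStep (reach dv' k.+1) (B k).1.2 (dv' k) (B k.+1).1.2 (B k.+1).2.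
Proof. by have [a [_ _ _ _ [_ _ h]]] := stO k; rewrite -rchE. Qed.

Lemma finE k : L (mkseq aa k.+1) -> exists q, q \in reach dv' k.+1 /\ q \in cfinal A.
Proof.
move=> /HL; rewrite /dfa_accepts mkseqS foldl_rcons -dqE => hf.
have [a [_ _ _ _ [_ h _]]] := stO k.
by rewrite -rchE; apply: h.
Qed.

Definition bp k := (B k).2.

Lemma bp0 : bp 0 = false.
Proof. by rewrite /bp H0. Qed.

Lemma bp_after N : exists k, (N < k) && bp k.
Proof.
have [j [hj hf]] := Hacc N.+1.*2.
move: hj hf; rewrite -(odd_double_half j); move: (j./2) => k.
case: (odd j).
  by rewrite add1n stE.
rewrite add0n leq_double => hk hb; exists k; by rewrite hk.
Qed.

Lemma bp_ex : exists k, bp k.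
Proof. by have [k /andP [_ h]] := bp_after 0; exists k. Qed.

Definition k0 := ex_minn bp_ex.
Lemma k0P : bp k0 /\ forall m, bp m -> k0 <= m.
Proof. by rewrite /k0; case: ex_minnP. Qed.

Lemma k0_pos : 0 < k0.
Proof. by case: k0P; case: k0 => // ; rewrite bp0. Qed.

Lemma M_pre j : j < k0 -> (B j).1.2 = None.
Proof.
elim: j => [|j IH] hj; first by rewrite H0.
have := MSk j; rewrite IH ?(ltnW hj) //.
case=> [[_ -> _] //|[_ _ hb]|[e [T [//]]]].
by have := (proj2 k0P) _ hb; rewrite leqNgt hj.
Qed.

Definition e0 := match (B k0).1.2 with Some p => p.1 | None => set0 end.

Lemma Mk0 : (B k0).1.2 = Some (e0, idT A) /\ Good (reach dv' k0) e0.
Proof.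
have hk := k0_pos; have := MSk k0.-1; rewrite prednK // M_pre ?prednK ?ltnSn //.
rewrite -/(bp k0) (proj1 k0P).
case=> [[_ _ //]|[_ [e [hg he]] _]|[e [T [//]]]].
by rewrite /e0 he.
Qed.

Lemma Mpers m : exists T, (B (k0 + m)).1.2 = Some (e0, T).
Proof.
elim: m => [|m [T hT]]; first by rewrite addn0 (proj1 Mk0); exists (idT A).
have := MSk (k0 + m); rewrite hT addnS.
case=> [[//]|[//]|[e [T' [[<- _] [[-> _]|[_ -> _]]]]]]; by eexists.
Qed.

Lemma bpM b : bp b -> k0 <= b -> (B b).1.2 = Some (e0, idT A).
Proof.
move=> hb hk; have [T hT] := Mpers (b - k0); rewrite subnKC // in hT.
have hb0 : 0 < b by apply: leq_trans k0_pos hk.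
have := MSk b.-1; rewrite prednK // -/(bp b) hb hT.
by case=> [[_ _ //]|[_ [e [_ [-> ->]]] _]|[e [T' [_ [[_ //]|[_ [-> ->] _]]]]]].
Qed.

Lemma segM b m : bp b -> k0 <= b -> (forall j, b < j <= b + m -> ~~ bp j) ->
  (B (b + m)).1.2 = Some (e0, typ dv' b m).
Proof.
move=> hb hk; elim: m => [|m IH] hg; first by rewrite addn0 bpM.
have hm : (B (b + m)).1.2 = Some (e0, typ dv' b m).
  apply: IH => j /andP [h1 h2]; apply: hg; rewrite h1 /=.
  by apply: leq_trans h2 _; rewrite leq_add2l.
have := MSk (b + m); rewrite hm -addnS.
have -> : (B (b + m.+1)).2 = false.
  apply/negbTE; apply: hg; rewrite leqnn andbT addnS ltnS; exact: leq_addr.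
case=> [[//]|[//]|[e [T [[<- <-] [[-> _]|[_ _ //]]]]]].
by [].
Qed.

Lemma segE b m : bp b -> k0 <= b -> (forall j, b < j < b + m.+1 -> ~~ bp j) ->
  bp (b + m.+1) -> typ dv' b m.+1 = e0.
Proof.
move=> hb hk hg hb2.
have hg' : forall j, b < j <= b + m -> ~~ bp j.
  by move=> j /andP [h1 h2]; apply: hg; rewrite h1 addnS ltnS.
have hm := segM hb hk hg'.
have := MSk (b + m); rewrite hm -addnS -/(bp (b + m.+1)) hb2.
by case=> [[//]|[//]|[e [T [[<- <-] [[_ //]|[hst _ _]]]]]].
Qed.

Fixpoint nb i := match i with 0 => k0 | i'.+1 => ex_minn (bp_after (nb i')) end.

Lemma nbS i : [/\ nb i < nb i.+1, bp (nb i.+1) &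
  forall j, nb i < j < nb i.+1 -> ~~ bp j].
Proof.
rewrite /=; case: ex_minnP => m /andP [h1 h2] hmin; split=> // j /andP [j1 j2].
apply/negP => hj; have := hmin j; rewrite j1 hj => /(_ isT).
by rewrite leqNgt j2.
Qed.

Lemma nb_lt i : nb i < nb i.+1.
Proof. by case: (nbS i). Qed.

Lemma nb_bp i : bp (nb i) /\ k0 <= nb i.
Proof.
case: i => [|i]; first by split; [exact: (proj1 k0P)|].
have [_ hb _] := nbS i; split=> //; exact: (proj2 k0P).
Qed.

Lemma nb_typ i : typ dv' (nb i) (nb i.+1 - nb i) = e0.
Proof.
have [h1 h2 h3] := nbS i; have [hb hk] := nb_bp i.
have hm : nb i.+1 - nb i = (nb i.+1 - nb i).-1.+1 by rewrite prednK // subn_gt0.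
rewrite hm; apply: segE => //.
- by move=> j; rewrite -hm subnKC ?(ltnW h1) //; exact: h3.
- by rewrite -hm subnKC ?(ltnW h1).
Qed.

Lemma sound2 r : inf_run_in dd r -> forall c : CN,
  infinitely_often (fun j => r j \in cincr c) ->
  infinitely_often (fun j => r j \in creset c).
Proof.
move=> [hr0 [hrc hrin]] c hinc; apply: NNPP => hno.
have [N hN] : exists N, forall j, N <= j -> r j \notin creset c.
  apply: NNPP => h; apply: hno => M; apply: NNPP => h2; apply: h; exists M.
  by move=> j hj; apply/negP => hj2; apply: h2; exists j.
pose s k := csrc (r k).
have hw : forall b e, wk dv' b e s r.
  by move=> b e k _; split; [exact: hrin | by [] | exact: hrc].
apply: (proj2 Mk0).
exists (fun i => s (nb i)), (fun i => Iset r (nb i) (nb i.+1)),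
  (fun i => Rset r (nb i) (nb i.+1)), c; split.
- exact: reachP_r.
- move=> i; rewrite -(nb_typ i).
  have := @typP_r _ _ dv' (nb i) (nb i.+1 - nb i) s r (hw _ _).
  by rewrite subnKC // ltnW // nb_lt.
- move=> M; have [j [hj hjc]] := hinc (nb M).
  have h0j : nb 0 <= j by exact: leq_trans (inc_mono nb_lt (leq0n M)) hj.
  have [i /andP [hi1 hi2]] := inc_cover nb_lt h0j.
  exists i; split.
    rewrite leqNgt; apply/negP => hiM.
    by have := leq_trans (inc_mono nb_lt hiM) hj; rewrite leqNgt hi2.
  by rewrite inE; apply/asbP; exists j; rewrite hi1 hi2.
- exists N => i hi; rewrite inE; apply/negP => /asbP [k [/andP [hk1 _] hk2]].
  have : N <= k.
    apply: leq_trans hi _; apply: leq_trans (leq_addr (nb 0) i) _.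
    exact: leq_trans (inc_ge nb_lt i) hk1.
  by move/hN; rewrite hk2.
Qed.

Lemma sound : win_cond L w.
Proof.
exists aa, dd; split; first by move=> i; rewrite waa wdd.
split; first by move=> i t; exact: lab.
split; first exact: sound2.
move=> i /finE [q [hq hqf]].
have [t0 _] : exists t : TR, True.
  by move: hq; rewrite /= inE => /existsP [t _]; exists t.
have [s [r [hs0 hw hsq]]] := reachP t0 hq.
have hw' : forall j, j <= i -> [/\ r j \in dv' j, csrc (r j) = s j & ctgt (r j) = s j.+1].
  by move=> j hj; apply: hw; rewrite ltnS hj.
exists r; split; first by have [_ -> _] := hw' 0 (leq0n i); exact: hs0.
split.
  move=> j hj; have [_ _ ->] := hw' j (ltnW hj).
  by have [_ -> _] := hw' j.+1 hj.
split; first by move=> j hj; have [] := hw' j hj.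
by have [_ _ ->] := hw' i (leqnn i); rewrite hsq.
Qed.

End Sound.


Theorem lemma3p1 (Sigma : finType) (A : cost_aut Sigma) (L : seq Sigma -> Prop) :
  regular L ->
  exists B : buchi (game_alph A),
    forall w : nat -> game_alph A, @win_cond Sigma A L w <-> buchi_accepts B w.
Proof.
move=> [D HD]; exists (Bu A D) => w; split.
- move=> [a [d [Hw [H1 [H2 H3]]]]].
  have [n [e [hn0 [hn hne]]]] := ramsey_path (col d) 1.
  exact: (rho_acc HD Hw H1 H2 H3 hn0 hn hne).
- move=> [rho [h0 [hs hacc]]].
  have H0 : rho 0 = st0 A D by move: h0; rewrite inE => /eqP.
  have HS : forall i, Step (rho i) (w i) (rho i.+1) by move=> i; apply/asbP; exact: hs i.
  have Hacc : infinitely_often (fun i => (rho i).2).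
    by move=> N; have [j [hj]] := hacc N; rewrite inE; exists j.
  have [a0 _] := w_even H0 HS 0.
  have [d0 _] := w_odd H0 HS 0.
  exact: (sound HD H0 HS Hacc a0 d0).
Qed.
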